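(* Let $\alpha>0$ and let $\tilde\psi_\ell,\tilde\psi_g\in C^2\big((\alpha,\infty)\times(0,\infty)\big)$ be functions of $(v,\theta)$. Set $\tilde p_i=-\partial_v\tilde\psi_i$ and $\tilde\eta_i=-\partial_\theta\tilde\psi_i$ for $i\in\{\ell,g\}$. Let $\rho_\ell>0$ and $\theta_b>0$ be such that $v_\ell:=1/\rho_\ell=v_\ell^*(\theta_b)$ is the saturated liquid volume at temperature $\theta_b$, and let $v_g^*:=v_g^*(\theta_b)$ be the corresponding saturated gas volume; that is, $\alpha<v_\ell<v_g^*$ and \[ \tilde p_\ell(v_\ell,\theta_b)=\tilde p_g(v_g^*,\theta_b)=\frac{\tilde\psi_\ell(v_\ell,\theta_b)-\tilde\psi_g(v_g^*,\theta_b)}{v_g^*-v_\ell}. \] For $\theta>0$, $v>\alpha$ with $v\ne v_\ell$, and $Z\in\mathbf{R}$ define \begin{align*} f_1(\theta,v,Z)&=\tilde p_\ell(v_\ell,\theta)-Z(v-v_\ell)-\frac{1}{v-v_\ell}\big(\tilde\psi_\ell(v_\ell,\theta)-\tilde\psi_g(v,\theta)\big),\\ f_2(\theta,v,Z)&=\tilde p_g(v,\theta)+Z(v-v_\ell)-\frac{1}{v-v_\ell}\big(\tilde\psi_\ell(v_\ell,\theta)-\tilde\psi_g(v,\theta)\big). \end{align*} Assume \[ \partial_v\tilde\eta_\ell(v_\ell,\theta_b)>\frac{\tilde\eta_g(v_g^*,\theta_b)-\tilde\eta_\ell(v_\ell,\theta_b)}{v_g^*-v_\ell},\qquad \partial_v\tilde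 p_g(v_g^*,\theta_b)<0 . \] Then for all sufficiently small $Z$ there is a unique $(v,\theta)$ near $(v_g^*,\theta_b)$ such that $f_1(\theta,v,Z)=0$ and $f_2(\theta,v,Z)=0$. Moreover, the resulting map $Z\mapsto\theta$ is strictly increasing.
   Context: $\tilde\psi_\ell$ and $\tilde\psi_g$ are the mass specific Helmholtz energies of the liquid and gas phase written as functions of the mass specific volume $v=1/\rho$ and the temperature $\theta$; $\tilde p_i$ is the pressure and $\tilde\eta_i$ the mass specific entropy. The displayed condition defining $v_\ell^*(\theta_b)$, $v_g^*(\theta_b)$ expresses that these are the contact points of the bitangent line to the graphs of $\tilde\psi_\ell(\cdot,\theta_b)$ and $\tilde\psi_g(\cdot,\theta_b)$ (equal slopes $-\tilde p$ and the line through both points). The equations $f_1=f_2=0$ with $Z=j_\Gamma^2/2$ are the momentum balance $\tilde p_\ell-\tilde p_g=j_\Gamma^2(v-v_\ell)$ and the Gibbs–Thomson relation $\tilde\psi_g(v,\theta)-\tilde\psi_\ell(v_\ell,\theta)+(v-v_\ell)\frac{\tilde p_\ell+\tilde p_g}{2}=0$ at a flat liquid–gas interface with phase flux $j_\Gamma$, where $\theta$ is the interface temperature and $v=1/\rho_g$ the gas specific volume. *)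

(* Defs.v *)
From Stdlib Require Import Reals.
From Coquelicot Require Import Coquelicot.
Open Scope R_scope.

Definition dv (f : R -> R -> R) (v th : R) : R := Derive (fun x => f x th) v.
Definition dth (f : R -> R -> R) (v th : R) : R := Derive (fun t => f v t) th.

Definition cont2 (f : R -> R -> R) (v th : R) : Prop :=
  continuous (fun p : R * R => f (fst p) (snd p)) (v, th).

Definition C1_on (U : R -> R -> Prop) (f : R -> R -> R) : Prop :=
  forall v th, U v th ->
    ex_derive (fun x => f x th) v /\ ex_derive (fun t => f v t) th /\
    cont2 f v th /\ cont2 (dv f) v th /\ cont2 (dth f) v th.

Definition C2_on (U : R -> R -> Prop) (f : R -> R -> R) : Prop :=
  C1_on U f /\ C1_on U (dv f) /\ C1_on U (dth f).

Definition dom (alpha : R) (v th : R) : Prop := alpha < v /\ 0 < th.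

Definition pres (psi : R -> R -> R) (v th : R) : R := - dv psi v th.
Definition entr (psi : R -> R -> R) (v th : R) : R := - dth psi v th.

Definition f1 (psil psig : R -> R -> R) (vl th v Z : R) : R :=
  pres psil vl th - Z * (v - vl) - / (v - vl) * (psil vl th - psig v th).
Definition f2 (psil psig : R -> R -> R) (vl th v Z : R) : R :=
  pres psig v th + Z * (v - vl) - / (v - vl) * (psil vl th - psig v th).

(* Main.v *)
Require Import Defs.
From Stdlib Require Import Reals.
From Coquelicot Require Import Coquelicot.
From Stdlib Require Import Lra ClassicalEpsilon.
Open Scope R_scope.
Lemma c2_2d f v t : cont2 f v t -> continuity_2d_pt f v t.
Proof. intro H. apply continuity_2d_pt_filterlim. exact H. Qed.

Lemma c2d_ed f x y eps : continuity_2d_pt f x y -> 0 < eps ->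
  exists d, 0 < d /\ forall u v, Rabs (u - x) < d -> Rabs (v - y) < d ->
    Rabs (f u v - f x y) < eps.
Proof.
  intros H He. destruct (H (mkposreal eps He)) as [d Hd].
  exists d. split; [apply cond_pos|]. intros; apply Hd; auto.
Qed.

Lemma c2d_lift f a x y : continuity_2d_pt f a y -> continuity_2d_pt (fun u v => f a v) x y.
Proof.
  intros H eps. destruct (H eps) as [d Hd]. exists d. intros u v _ Hv.
  apply Hd; auto. rewrite Rminus_eq_0, Rabs_R0. apply cond_pos.
Qed.

Lemma ex_cpt f x : ex_derive f x -> continuity_pt f x.
Proof. intro H. apply continuity_pt_filterlim. apply (ex_derive_continuous f x H). Qed.

Lemma ex_ed f x eps : ex_derive f x -> 0 < eps ->
  exists d, 0 < d /\ forall y, Rabs (y - x) < d -> Rabs (f y - f x) < eps.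
Proof.
  intros H He. pose proof (ex_cpt f x H) as C.
  unfold continuity_pt, continue_in, limit1_in, limit_in in C.
  destruct (C eps He) as [d [Hd Hd']]. exists d. split; auto.
  intros y Hy. destruct (Req_dec y x) as [->|Hne].
  - rewrite Rminus_eq_0, Rabs_R0; auto.
  - apply (Hd' y). split; [split; [exact I| auto]| exact Hy].
Qed.

Lemma mvt f df a b : a <= b -> (forall x, a <= x <= b -> is_derive f x (df x)) ->
  exists c, a <= c <= b /\ f b - f a = df c * (b - a).
Proof.
  intros Hab H. destruct (MVT_gen f a b df) as [c [Hc E]].
  - intros x Hx. rewrite Rmin_left in Hx by lra. rewrite Rmax_right in Hx by lra.
    apply H; lra.
  - intros x Hx. rewrite Rmin_left in Hx by lra. rewrite Rmax_right in Hx by lra.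
    apply ex_cpt. exists (df x). apply H; lra.
  - rewrite Rmin_left in Hc by lra. rewrite Rmax_right in Hc by lra.
    exists c; auto.
Qed.

Lemma lip_cont f K x : 0 < K -> (forall a b, Rabs (f a - f b) <= K * Rabs (a - b)) ->
  continuity_pt f x.
Proof.
  intros HK H. unfold continuity_pt, continue_in, limit1_in, limit_in.
  intros eps He. exists (eps / K). split. apply Rdiv_lt_0_compat; auto.
  intros y [_ Hy]. simpl in *. unfold R_dist in *.
  eapply Rle_lt_trans. apply H.
  apply (Rmult_lt_compat_l K) in Hy; auto.
  replace (K * (eps / K)) with eps in Hy by (field; lra). exact Hy.
Qed.

Definition clamp (a b x : R) := Rmax a (Rmin b x).

Lemma clamp_lip a b x y : a <= b -> Rabs (clamp a b x - clamp a b y) <= Rabs (x - y).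
Proof.
  intro. unfold clamp, Rmax, Rmin.
  repeat destruct Rle_dec; unfold Rabs; repeat destruct Rcase_abs; lra.
Qed.

Lemma clamp_in a b x : a <= b -> a <= clamp a b x <= b.
Proof. intro. unfold clamp, Rmax, Rmin. repeat destruct Rle_dec; lra. Qed.

Lemma clamp_id a b x : a <= x <= b -> clamp a b x = x.
Proof. intro. unfold clamp, Rmax, Rmin. repeat destruct Rle_dec; lra. Qed.
Definition Gf (psil psig : R -> R -> R) vl v t Z :=
  pres psig v t - pres psil vl t + 2 * Z * (v - vl).
Definition F1 (psil psig : R -> R -> R) vl v t Z :=
  (v - vl) * pres psil vl t - Z * (v - vl) ^ 2 - psil vl t + psig v t.
Definition dF (psil psig : R -> R -> R) vl v t :=
  (v - vl) * dth (pres psil) vl t - dth psil vl t + dth psig v t.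

Lemma ex_pres_v alpha psi v t : C2_on (dom alpha) psi -> alpha < v -> 0 < t ->
  ex_derive (fun x => pres psi x t) v.
Proof. intros [_ [H _]] ? ?. destruct (H v t) as [E _]. split; auto.
  unfold pres. apply (ex_derive_opp (fun x => dv psi x t)) || apply (ex_derive_opp (fun s => dv psi v s)). exact E. Qed.

Lemma ex_pres_t alpha psi v t : C2_on (dom alpha) psi -> alpha < v -> 0 < t ->
  ex_derive (fun s => pres psi v s) t.
Proof. intros [_ [H _]] ? ?. destruct (H v t) as [_ [E _]]. split; auto.
  unfold pres. apply (ex_derive_opp (fun x => dv psi x t)) || apply (ex_derive_opp (fun s => dv psi v s)). exact E. Qed.

Lemma ex_v alpha psi v t : C2_on (dom alpha) psi -> alpha < v -> 0 < t ->
  ex_derive (fun x => psi x t) v.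
Proof. intros [H _] ? ?. destruct (H v t) as [E _]. split; auto. exact E. Qed.

Lemma ex_t alpha psi v t : C2_on (dom alpha) psi -> alpha < v -> 0 < t ->
  ex_derive (fun s => psi v s) t.
Proof. intros [H _] ? ?. destruct (H v t) as [_ [E _]]. split; auto. exact E. Qed.

Lemma DF1v alpha psil psig vl v t Z : C2_on (dom alpha) psig -> alpha < v -> 0 < t ->
  is_derive (fun x => F1 psil psig vl x t Z) v (- Gf psil psig vl v t Z).
Proof.
  intros HP Hv Ht. unfold F1.
  pose proof (ex_v _ _ _ _ HP Hv Ht).
  auto_derive; auto. unfold Gf, pres, dv. ring.
Qed.

Lemma DGv alpha psil psig vl v t Z : C2_on (dom alpha) psig -> alpha < v -> 0 < t ->
  is_derive (fun x => Gf psil psig vl x t Z) v (dv (pres psig) v t + 2 * Z).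
Proof.
  intros HP Hv Ht. unfold Gf.
  pose proof (ex_pres_v _ _ _ _ HP Hv Ht).
  auto_derive; auto. unfold dv. ring.
Qed.

Lemma DF1t alpha psil psig vl v t Z : C2_on (dom alpha) psil -> C2_on (dom alpha) psig ->
  alpha < v -> alpha < vl -> 0 < t ->
  is_derive (fun s => F1 psil psig vl v s Z) t (dF psil psig vl v t).
Proof.
  intros HL HP Hv Hvl Ht. unfold F1.
  pose proof (ex_pres_t _ _ _ _ HL Hvl Ht).
  pose proof (ex_t _ _ _ _ HL Hvl Ht).
  pose proof (ex_t _ _ _ _ HP Hv Ht).
  auto_derive; auto. unfold dF, dth. ring.
Qed.

Lemma exGt alpha psil psig vl v t Z : C2_on (dom alpha) psil -> C2_on (dom alpha) psig ->
  alpha < v -> alpha < vl -> 0 < t ->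
  ex_derive (fun s => Gf psil psig vl v s Z) t.
Proof.
  intros HL HP Hv Hvl Ht. unfold Gf.
  pose proof (ex_pres_t _ _ _ _ HL Hvl Ht).
  pose proof (ex_pres_t _ _ _ _ HP Hv Ht).
  auto_derive; auto.
Qed.

Lemma Cb alpha psig v t : C2_on (dom alpha) psig -> alpha < v -> 0 < t ->
  continuity_2d_pt (dv (pres psig)) v t.
Proof.
  intros [_ [H _]] Hv Ht. destruct (H v t) as [_ [_ [_ [C _]]]]. split; auto.
  apply continuity_2d_pt_ext with (fun a b => - dv (dv psig) a b).
  - intros a b. unfold pres. symmetry. unfold dv at 1. rewrite Derive_opp. reflexivity.
  - apply continuity_2d_pt_opp. apply c2_2d. exact C.
Qed.

Lemma Cc alpha psil psig vl v t : C2_on (dom alpha) psil -> C2_on (dom alpha) psig ->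
  alpha < v -> alpha < vl -> 0 < t ->
  continuity_2d_pt (dF psil psig vl) v t.
Proof.
  intros [HL0 [HL1 _]] [HP0 _] Hv Hvl Ht.
  destruct (HL1 vl t) as [_ [_ [_ [_ C1]]]]. split; auto.
  destruct (HL0 vl t) as [_ [_ [_ [_ C2]]]]. split; auto.
  destruct (HP0 v t) as [_ [_ [_ [_ C3]]]]. split; auto.
  apply continuity_2d_pt_ext with
    (fun a b => (a - vl) * (- dth (dv psil) vl b) - dth psil vl b + dth psig a b).
  - intros a b. unfold dF, pres, dth. rewrite Derive_opp. reflexivity.
  - apply continuity_2d_pt_plus; [apply continuity_2d_pt_minus|].
    + apply continuity_2d_pt_mult.
      * apply continuity_2d_pt_minus. apply continuity_2d_pt_id1. apply continuity_2d_pt_const.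
      * apply continuity_2d_pt_opp. apply (c2d_lift (dth (dv psil))). apply c2_2d. exact C1.
    + apply (c2d_lift (dth psil)). apply c2_2d. exact C2.
    + apply c2_2d. exact C3.
Qed.

Lemma Sch alpha psi v t : C2_on (dom alpha) psi -> alpha < v -> 0 < t ->
  dv (dth psi) v t = dth (dv psi) v t.
Proof.
  intros [H0 [H1 H2]] Hv Ht.
  assert (Hd : 0 < Rmin (v - alpha) t) by (apply Rmin_glb_lt; lra).
  assert (Dm : forall a b, Rabs (a - v) < Rmin (v - alpha) t -> Rabs (b - t) < Rmin (v - alpha) t ->
     dom alpha a b).
  { intros a b Ha Hb. pose proof (Rmin_l (v - alpha) t). pose proof (Rmin_r (v - alpha) t).
    apply Rabs_def2 in Ha. apply Rabs_def2 in Hb. split; lra. }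
  apply (Schwarz psi v t).
  - exists (mkposreal _ Hd). intros a b Ha Hb. simpl in *. pose proof (Dm a b Ha Hb) as D.
    destruct (H0 a b D) as [E1 [E2 _]]. destruct (H2 a b D) as [E3 _].
    destruct (H1 a b D) as [_ [E4 _]]. repeat split; assumption.
  - destruct (H2 v t) as [_ [_ [_ [C _]]]]. split; auto. apply c2_2d; exact C.
  - destruct (H1 v t) as [_ [_ [_ [_ C]]]]. split; auto. apply c2_2d; exact C.
Qed.
Lemma ab1 a x e : Rabs (x - a) < e -> a - e < x /\ x < a + e.
Proof. intro H. apply Rabs_def2 in H. lra. Qed.
Lemma ab2 a x e : a - e < x -> x < a + e -> Rabs (x - a) < e.
Proof. intros. apply Rabs_def1; lra. Qed.
Lemma abz x e : Rabs x < e -> - e < x /\ x < e.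
Proof. intro H. apply Rabs_def2 in H. lra. Qed.

Theorem theorem3p2 (alpha : R) (psil psig : R -> R -> R) (rho_l thb vgs : R) :
  0 < alpha ->
  C2_on (dom alpha) psil -> C2_on (dom alpha) psig ->
  0 < rho_l -> 0 < thb ->
  alpha < / rho_l -> / rho_l < vgs ->
  pres psil (/ rho_l) thb = pres psig vgs thb ->
  pres psig vgs thb = (psil (/ rho_l) thb - psig vgs thb) / (vgs - / rho_l) ->
  dv (entr psil) (/ rho_l) thb >
    (entr psig vgs thb - entr psil (/ rho_l) thb) / (vgs - / rho_l) ->
  dv (pres psig) vgs thb < 0 ->
  exists (delta eps : R) (V Th : R -> R),
    0 < delta /\ 0 < eps /\
    (forall Z, Rabs Z < delta ->
       Rabs (V Z - vgs) < eps /\ Rabs (Th Z - thb) < eps /\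
       alpha < V Z /\ 0 < Th Z /\ V Z <> / rho_l /\
       f1 psil psig (/ rho_l) (Th Z) (V Z) Z = 0 /\
       f2 psil psig (/ rho_l) (Th Z) (V Z) Z = 0 /\
       (forall v th, Rabs (v - vgs) < eps -> Rabs (th - thb) < eps ->
          alpha < v -> 0 < th -> v <> / rho_l ->
          f1 psil psig (/ rho_l) th v Z = 0 ->
          f2 psil psig (/ rho_l) th v Z = 0 ->
          v = V Z /\ th = Th Z)) /\
    (forall Z1 Z2, Rabs Z1 < delta -> Rabs Z2 < delta -> Z1 < Z2 -> Th Z1 < Th Z2).
Proof.
  intros Ha HL HP Hrho Hthb Hal Hlg Hp1 Hp2 Hent Hpg.
  set (vl := / rho_l) in *.
  set (D0 := vgs - vl).
  assert (HD0 : 0 < D0) by (unfold D0; lra).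
  assert (Hvl : alpha < vl) by lra.
  assert (Hvg : alpha < vgs) by lra.
  set (G := Gf psil psig vl). set (F := F1 psil psig vl). set (dFf := dF psil psig vl).
  assert (G0 : G vgs thb 0 = 0).
  { unfold G, Gf. rewrite Hp1. ring. }
  assert (F0 : F vgs thb 0 = 0).
  { unfold F, F1. rewrite Hp1, Hp2. field. lra. }
  set (c := dFf vgs thb).
  assert (Hc : 0 < c).
  { assert (E1 : dth (pres psil) vl thb = dv (entr psil) vl thb).
    { assert (X1 : dth (pres psil) vl thb = - dth (dv psil) vl thb)
        by (unfold dth at 1, pres; apply (Derive_opp (fun t => dv psil vl t))).
      assert (X2 : dv (entr psil) vl thb = - dv (dth psil) vl thb)
        by (unfold dv at 1, entr; apply (Derive_opp (fun x => dth psil x thb))).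
      rewrite X1, X2, (Sch alpha psil vl thb); auto. }
    unfold c, dFf, dF. rewrite E1. unfold entr in Hent. fold D0 in Hent |- *.
    set (E' := dv (entr psil) vl thb) in *.
    assert (D0 * ((- dth psig vgs thb - - dth psil vl thb) / D0) < D0 * E') by
      (apply Rmult_lt_compat_l; auto).
    replace (D0 * ((- dth psig vgs thb - - dth psil vl thb) / D0)) with
      (dth psil vl thb - dth psig vgs thb) in H by (field; lra).
    lra. }
  set (bb := dv (pres psig) vgs thb) in *.
  assert (Hc2 : 0 < c / 2) by lra.
  assert (Hb2 : 0 < - bb / 2) by lra.
  destruct (c2d_ed dFf vgs thb (c/2) (Cc alpha psil psig vl vgs thb HL HP Hvg Hvl Hthb) Hc2)
    as [d1 [Hd1 Hd1']].
  destruct (c2d_ed (dv (pres psig)) vgs thb (- bb/2) (Cb alpha psig vgs thb HP Hvg Hthb) Hb2)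
    as [d2 [Hd2 Hd2']].
  set (rho := Rmin (Rmin d1 d2) (Rmin (D0/2) (thb/2))).
  assert (Hrh : 0 < rho /\ rho <= d1 /\ rho <= d2 /\ rho <= D0/2 /\ rho <= thb/2).
  { unfold rho. repeat split.
    - repeat apply Rmin_glb_lt; lra.
    - eapply Rle_trans; [apply Rmin_l|apply Rmin_l].
    - eapply Rle_trans; [apply Rmin_l|apply Rmin_r].
    - eapply Rle_trans; [apply Rmin_r|apply Rmin_l].
    - eapply Rle_trans; [apply Rmin_r|apply Rmin_r]. }
  destruct Hrh as [Hrho0 [Hrd1 [Hrd2 [HrD HrT]]]].
  assert (Hbox : forall v t, Rabs (v - vgs) < rho -> Rabs (t - thb) < rho ->
     alpha < v /\ D0 / 2 < v - vl /\ 0 < t /\ c/2 < dFf v t < 3*c/2 /\ dv (pres psig) v t < bb/2).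
  { intros v t Hv Ht.
    assert (A1 := Hd1' v t ltac:(lra) ltac:(lra)).
    assert (A2 := Hd2' v t ltac:(lra) ltac:(lra)).
    fold c in A1. fold bb in A2.
    apply ab1 in Hv. apply ab1 in Ht. apply abz in A1. apply abz in A2.
    unfold D0 in *. repeat split; lra. }
  set (s := rho / 2).
  assert (Hs : 0 < s) by (unfold s; lra).
  assert (Hsrho : s < rho) by (unfold s; lra).
  set (Z0 := - bb / 8).
  assert (Gdec : forall t Z v1 v2, Rabs (t - thb) < rho -> Rabs Z < Z0 ->
     vgs - s <= v1 -> v1 <= v2 -> v2 <= vgs + s ->
     G v1 t Z - G v2 t Z >= (- bb / 4) * (v2 - v1)).
  { intros t Z v1 v2 Ht HZ H1 H12 H2.
    destruct (mvt (fun x => G x t Z) (fun x => dv (pres psig) x t + 2 * Z) v1 v2 H12)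
      as [xi [Hxi E]].
    { intros x Hx. unfold G. apply (DGv alpha); auto.
      - apply (Hbox x t); auto. apply ab2; unfold s in *; lra.
      - apply (Hbox x t); auto. apply ab2; unfold s in *; lra. }
    simpl in E.
    assert (B := Hbox xi t ltac:(apply ab2; unfold s in *; lra) Ht).
    apply abz in HZ. unfold Z0 in HZ.
    assert (dv (pres psig) xi t + 2 * Z <= bb / 4) by lra.
    nra. }
  assert (Fmin : forall t Z v v', Rabs (t - thb) < rho -> Rabs Z < Z0 ->
     vgs - s <= v <= vgs + s -> vgs - s <= v' <= vgs + s -> G v' t Z = 0 ->
     F v' t Z <= F v t Z).
  { intros t Z v v' Ht HZ Hv Hv' HG.
    assert (Dv : forall x, vgs - s <= x <= vgs + s ->
       is_derive (fun x => F x t Z) x (- G x t Z)).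
    { intros x Hx. unfold F, G. apply (DF1v alpha); auto.
      - apply (Hbox x t); auto. apply ab2; unfold s in *; lra.
      - apply (Hbox x t); auto. apply ab2; unfold s in *; lra. }
    destruct (Rle_dec v v') as [Hle|Hle].
    - destruct (mvt (fun x => F x t Z) (fun x => - G x t Z) v v' Hle) as [xi [Hxi E]].
      { intros x Hx. apply Dv. lra. }
      simpl in E. assert (K := Gdec t Z xi v' Ht HZ ltac:(lra) ltac:(lra) ltac:(lra)).
      assert (0 <= G xi t Z) by nra. nra.
    - assert (Hle' : v' <= v) by lra.
      destruct (mvt (fun x => F x t Z) (fun x => - G x t Z) v' v Hle') as [xi [Hxi E]].
      { intros x Hx. apply Dv. lra. }
      simpl in E. assert (K := Gdec t Z v' xi Ht HZ ltac:(lra) ltac:(lra) ltac:(lra)).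
      assert (G xi t Z <= 0) by nra. nra. }
  assert (Ft : forall v t1 t2 Z, Rabs (v - vgs) < rho -> Rabs (t1 - thb) < rho ->
     Rabs (t2 - thb) < rho -> t1 <= t2 ->
     c / 2 * (t2 - t1) <= F v t2 Z - F v t1 Z <= 3 * c / 2 * (t2 - t1)).
  { intros v t1 t2 Z Hv H1 H2 H12.
    apply ab1 in H1. apply ab1 in H2.
    destruct (mvt (fun s => F v s Z) (fun s => dFf v s) t1 t2 H12) as [xi [Hxi E]].
    { intros x Hx. unfold F, dFf. apply (DF1t alpha); auto.
      - apply (Hbox v x); auto. apply ab2; lra.
      - apply (Hbox v x); auto. apply ab2; lra. }
    simpl in E. assert (B := Hbox v xi Hv ltac:(apply ab2; lra)).
    split; nra. }
  assert (FZ : forall v t Z1 Z2, F v t Z2 - F v t Z1 = - (Z2 - Z1) * (v - vl) ^ 2).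
  { intros. unfold F, F1. ring. }
  assert (Gsh : forall v t Z, G v t Z = G v t 0 + 2 * Z * (v - vl)).
  { intros. unfold G, Gf. ring. }
  assert (HZ0 : 0 < Z0) by (unfold Z0; lra).
  assert (Hsr : vgs - s <= vgs + s) by lra.
  set (m := (- bb / 4) * s).
  assert (Hm : 0 < m) by (unfold m; nra).
  assert (Hthb0 : Rabs (thb - thb) < rho) by (rewrite Rminus_eq_0, Rabs_R0; lra).
  assert (HZ00 : Rabs 0 < Z0) by (rewrite Rabs_R0; lra).
  assert (Gp : G (vgs - s) thb 0 >= m).
  { pose proof (Gdec thb 0 (vgs - s) vgs Hthb0 HZ00 ltac:(lra) ltac:(lra) ltac:(lra)).
    unfold m. rewrite G0 in H. lra. }
  assert (Gm : - G (vgs + s) thb 0 >= m).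
  { pose proof (Gdec thb 0 vgs (vgs + s) Hthb0 HZ00 ltac:(lra) ltac:(lra) ltac:(lra)).
    unfold m. rewrite G0 in H. lra. }
  assert (Hvs1 : alpha < vgs - s /\ alpha < vgs + s).
  { unfold s, D0 in *. lra. }
  assert (Hm2 : 0 < m / 2) by lra.
  destruct (ex_ed (fun t => G (vgs - s) t 0) thb (m/2)
    ltac:(unfold G; apply (exGt alpha); tauto) Hm2) as [r1 [Hr1 Hr1']].
  destruct (ex_ed (fun t => G (vgs + s) t 0) thb (m/2)
    ltac:(unfold G; apply (exGt alpha); tauto) Hm2) as [r2 [Hr2 Hr2']].
  set (Z1 := m / (4 * (D0 + s))).
  assert (HZ1 : Z1 * (4 * (D0 + s)) = m) by (unfold Z1; field; lra).
  assert (HZ1p : 0 < Z1) by (unfold Z1; apply Rdiv_lt_0_compat; lra).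
  set (r := Rmin (Rmin r1 r2) rho).
  assert (Hr : 0 < r /\ r <= r1 /\ r <= r2 /\ r <= rho).
  { unfold r. repeat split.
    - repeat apply Rmin_glb_lt; lra.
    - eapply Rle_trans; [apply Rmin_l|apply Rmin_l].
    - eapply Rle_trans; [apply Rmin_l|apply Rmin_r].
    - apply Rmin_r. }
  destruct Hr as [Hr0 [Hrr1 [Hrr2 Hrrho]]].
  set (dZ := Rmin Z0 Z1).
  assert (HdZ : 0 < dZ /\ dZ <= Z0 /\ dZ <= Z1).
  { unfold dZ. split; [apply Rmin_glb_lt; lra|split; [apply Rmin_l|apply Rmin_r]]. }
  destruct HdZ as [HdZ0 [HdZ1 HdZ2]].
  assert (HsD : s <= D0 / 4) by (unfold s; lra).
  assert (Wex : forall t Z, Rabs (t - thb) < r -> Rabs Z < dZ ->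
     exists v, Rabs (v - vgs) < s /\ G v t Z = 0).
  { intros t Z Ht HZ.
    assert (A1 := Hr1' t ltac:(lra)). assert (A2 := Hr2' t ltac:(lra)).
    simpl in A1, A2. apply abz in A1. apply abz in A2. apply abz in HZ.
    assert (P1 : 0 < G (vgs - s) t Z).
    { rewrite Gsh. fold D0. replace (vgs - s - vl) with (D0 - s) by (unfold D0; ring).
      assert (2 * Z * (D0 - s) > - (m / 2)) by nra. lra. }
    assert (P2 : G (vgs + s) t Z < 0).
    { rewrite Gsh. replace (vgs + s - vl) with (D0 + s) by (unfold D0; ring).
      assert (2 * Z * (D0 + s) < m / 2) by nra. lra. }
    destruct (Ranalysis5.IVT_interv (fun v => - G v t Z) (vgs - s) (vgs + s))
      as [z [Hz Ez]].
    { intros a Ha'. apply ex_cpt. apply (ex_derive_opp (fun v => G v t Z)).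
      exists (dv (pres psig) a t + 2 * Z). unfold G. apply (DGv alpha); auto.
      - unfold s, D0 in *. lra.
      - apply (Hbox vgs t); [rewrite Rminus_eq_0, Rabs_R0; lra| apply ab2; apply ab1 in Ht; lra]. }
    { lra. }
    { simpl. lra. }
    { simpl. lra. }
    exists z. simpl in Ez. split; [|lra].
    assert (z <> vgs - s) by (intro; subst z; lra).
    assert (z <> vgs + s) by (intro; subst z; lra).
    apply ab2; lra. }
  set (w := fun t Z => epsilon (inhabits 0) (fun v => Rabs (v - vgs) < s /\ G v t Z = 0)).
  assert (Wspec : forall t Z, Rabs (t - thb) < r -> Rabs Z < dZ ->
     Rabs (w t Z - vgs) < s /\ G (w t Z) t Z = 0).
  { intros t Z Ht HZ. unfold w. apply epsilon_spec. apply Wex; auto. }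
  assert (Wuniq : forall t Z v, Rabs (t - thb) < r -> Rabs Z < dZ ->
     Rabs (v - vgs) <= s -> G v t Z = 0 -> v = w t Z).
  { intros t Z v Ht HZ Hv HG. destruct (Wspec t Z Ht HZ) as [Hw HGw].
    apply Rabs_le_between' in Hv. apply ab1 in Hw.
    assert (Ht' : Rabs (t - thb) < rho) by lra.
    assert (HZ' : Rabs Z < Z0) by lra.
    destruct (Rtotal_order v (w t Z)) as [Hlt|[Heq|Hgt]]; auto.
    - pose proof (Gdec t Z v (w t Z) Ht' HZ' ltac:(lra) ltac:(lra) ltac:(lra)). nra.
    - pose proof (Gdec t Z (w t Z) v Ht' HZ' ltac:(lra) ltac:(lra) ltac:(lra)). nra. }
  set (h := fun t Z => F (w t Z) t Z).
  assert (Wbox : forall t Z, Rabs (t - thb) < r -> Rabs Z < dZ ->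
     vgs - s <= w t Z <= vgs + s /\ Rabs (w t Z - vgs) < rho).
  { intros t Z Ht HZ. destruct (Wspec t Z Ht HZ) as [Hw _].
    pose proof (ab1 _ _ _ Hw). split; [lra|]. apply ab2; lra. }
  assert (Hinc : forall Z t1 t2, Rabs Z < dZ -> Rabs (t1 - thb) < r -> Rabs (t2 - thb) < r ->
     t1 <= t2 -> c / 2 * (t2 - t1) <= h t2 Z - h t1 Z <= 3 * c / 2 * (t2 - t1)).
  { intros Z t1 t2 HZ H1 H2 H12. unfold h.
    destruct (Wbox t1 Z H1 HZ) as [B1 B1']. destruct (Wbox t2 Z H2 HZ) as [B2 B2'].
    assert (HZ' : Rabs Z < Z0) by lra.
    assert (H1' : Rabs (t1 - thb) < rho) by lra.
    assert (H2' : Rabs (t2 - thb) < rho) by lra.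
    pose proof (Fmin t1 Z (w t2 Z) (w t1 Z) H1' HZ' B2 B1 (proj2 (Wspec t1 Z H1 HZ))).
    pose proof (Fmin t2 Z (w t1 Z) (w t2 Z) H2' HZ' B1 B2 (proj2 (Wspec t2 Z H2 HZ))).
    pose proof (Ft (w t2 Z) t1 t2 Z B2' H1' H2' H12).
    pose proof (Ft (w t1 Z) t1 t2 Z B1' H1' H2' H12).
    lra. }
  assert (HZm : forall t Z1 Z2, Rabs (t - thb) < r -> Rabs Z1 < dZ -> Rabs Z2 < dZ ->
     h t Z2 - h t Z1 <= - (Z2 - Z1) * (w t Z1 - vl) ^ 2 /\
     h t Z2 - h t Z1 >= - (Z2 - Z1) * (w t Z2 - vl) ^ 2).
  { intros t Za Zb Ht HZa HZb. unfold h.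
    destruct (Wbox t Za Ht HZa) as [B1 B1']. destruct (Wbox t Zb Ht HZb) as [B2 B2'].
    assert (Ht' : Rabs (t - thb) < rho) by lra.
    pose proof (Fmin t Za (w t Zb) (w t Za) Ht' ltac:(lra) B2 B1 (proj2 (Wspec t Za Ht HZa))).
    pose proof (Fmin t Zb (w t Za) (w t Zb) Ht' ltac:(lra) B1 B2 (proj2 (Wspec t Zb Ht HZb))).
    pose proof (FZ (w t Za) t Za Zb). pose proof (FZ (w t Zb) t Za Zb).
    split; lra. }
  assert (Hthr : Rabs (thb - thb) < r) by (rewrite Rminus_eq_0, Rabs_R0; lra).
  assert (HZd0 : Rabs 0 < dZ) by (rewrite Rabs_R0; lra).
  assert (h0 : h thb 0 = 0).
  { unfold h. rewrite <- (Wuniq thb 0 vgs Hthr HZd0); auto.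
    rewrite Rminus_eq_0, Rabs_R0; lra. }
  set (eps := Rmin s (r / 2)).
  assert (Heps : 0 < eps /\ eps <= s /\ eps <= r / 2).
  { unfold eps. split; [apply Rmin_glb_lt; lra|split; [apply Rmin_l|apply Rmin_r]]. }
  destruct Heps as [Heps0 [Heps1 Heps2]].
  set (k := (- bb / 4) * eps / 2).
  assert (Hk : 0 < k) by (unfold k; nra).
  assert (Hk2 : 0 < k / 2) by lra.
  destruct (ex_ed (fun t => G vgs t 0) thb (k/2)
    ltac:(unfold G; apply (exGt alpha); tauto) Hk2) as [r3 [Hr3 Hr3']].
  simpl in Hr3'. rewrite G0 in Hr3'.
  set (Z2 := k / (4 * (D0 + s))).
  assert (HZ2 : Z2 * (4 * (D0 + s)) = k) by (unfold Z2; field; lra).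
  assert (HZ2p : 0 < Z2) by (unfold Z2; apply Rdiv_lt_0_compat; lra).
  set (r4 := Rmin eps r3 / 2).
  assert (Hr4 : 0 < r4 /\ r4 < eps /\ r4 < r3).
  { unfold r4. pose proof (Rmin_l eps r3). pose proof (Rmin_r eps r3).
    assert (0 < Rmin eps r3) by (apply Rmin_glb_lt; lra). lra. }
  destruct Hr4 as [Hr40 [Hr4e Hr43]].
  set (Z3 := c / 2 * r4 / (D0 + s) ^ 2).
  assert (HZ3 : Z3 * (D0 + s) ^ 2 = c / 2 * r4) by (unfold Z3; field; lra).
  assert (HZ3p : 0 < Z3) by (unfold Z3; apply Rdiv_lt_0_compat; [nra|]; apply pow_lt; lra).
  set (delta := Rmin (Rmin dZ Z2) Z3).
  assert (Hdl : 0 < delta /\ delta <= dZ /\ delta <= Z2 /\ delta <= Z3).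
  { unfold delta. repeat split.
    - repeat apply Rmin_glb_lt; lra.
    - eapply Rle_trans; [apply Rmin_l|apply Rmin_l].
    - eapply Rle_trans; [apply Rmin_l|apply Rmin_r].
    - apply Rmin_r. }
  destruct Hdl as [Hdl0 [Hdl1 [Hdl2 Hdl3]]].
  assert (Wclose : forall t Z, Rabs (t - thb) < r4 -> Rabs Z < delta ->
     Rabs (w t Z - vgs) < eps).
  { intros t Z Ht HZ.
    assert (Ht' : Rabs (t - thb) < r) by lra.
    assert (HZ' : Rabs Z < dZ) by lra.
    destruct (Wspec t Z Ht' HZ') as [Hw HGw].
    assert (A := Hr3' t ltac:(lra)). rewrite Rminus_0_r in A. apply abz in A.
    assert (B : Rabs (G vgs t Z) < k).
    { rewrite Gsh. fold D0. apply abz in HZ. apply Rabs_def1; nra. }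
    apply abz in B. apply ab1 in Hw.
    assert (Ht2 : Rabs (t - thb) < rho) by lra.
    assert (HZ2' : Rabs Z < Z0) by lra.
    destruct (Rle_dec (w t Z) vgs) as [Hle|Hle].
    - pose proof (Gdec t Z (w t Z) vgs Ht2 HZ2' ltac:(lra) Hle ltac:(lra)).
      apply ab2; [|lra]. unfold k in B. nra.
    - pose proof (Gdec t Z vgs (w t Z) Ht2 HZ2' ltac:(lra) ltac:(lra) ltac:(lra)).
      apply ab2; [lra|]. unfold k in B. nra. }
  assert (Zq : forall Z x, Rabs Z < Z3 -> D0 - s <= x - vl <= D0 + s ->
     Rabs (Z * (x - vl) ^ 2) < c / 2 * r4).
  { intros Z x HZ Hx. rewrite Rabs_mult, <- RPow_abs, pow2_abs.
    assert ((x - vl) ^ 2 <= (D0 + s) ^ 2) by nra.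
    pose proof (Rabs_pos Z). rewrite <- HZ3. apply Rle_lt_trans with (Rabs Z * (D0 + s) ^ 2); [apply Rmult_le_compat_l; auto|apply Rmult_lt_compat_r; [apply pow_lt; lra|auto]]. }
  assert (Hr4r : r4 < r) by lra.
  assert (Thex : forall Z, Rabs Z < delta -> exists t, Rabs (t - thb) < r4 /\ h t Z = 0).
  { intros Z HZ. assert (HZ' : Rabs Z < dZ) by lra.
    assert (HZ3' : Rabs Z < Z3) by lra.
    assert (Hp : Rabs (thb + r4 - thb) < r) by (apply ab2; lra).
    assert (Hm' : Rabs (thb - r4 - thb) < r) by (apply ab2; lra).
    assert (P1 : 0 < h (thb + r4) Z).
    { pose proof (Hinc 0 thb (thb + r4) HZd0 Hthr Hp ltac:(lra)).
      destruct (HZm (thb + r4) 0 Z Hp HZd0 HZ') as [_ X].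
      destruct (Wbox (thb + r4) Z Hp HZ') as [B _].
      pose proof (Zq Z (w (thb + r4) Z) HZ3' ltac:(unfold D0; lra)) as Q.
      apply abz in Q. lra. }
    assert (P2 : h (thb - r4) Z < 0).
    { pose proof (Hinc 0 (thb - r4) thb HZd0 Hm' Hthr ltac:(lra)).
      destruct (HZm (thb - r4) 0 Z Hm' HZd0 HZ') as [X _].
      destruct (Wbox (thb - r4) 0 Hm' HZd0) as [B _].
      pose proof (Zq Z (w (thb - r4) 0) HZ3' ltac:(unfold D0; lra)) as Q.
      apply abz in Q. lra. }
    set (hc := fun t => h (clamp (thb - r4) (thb + r4) t) Z).
    destruct (Ranalysis5.IVT_interv hc (thb - r4) (thb + r4)) as [z [Hz Ez]].
    { intros a _. apply (lip_cont hc (3 * c / 2)); [lra|].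
      intros x y. unfold hc.
      pose proof (clamp_in (thb - r4) (thb + r4) x ltac:(lra)) as Cx.
      pose proof (clamp_in (thb - r4) (thb + r4) y ltac:(lra)) as Cy.
      pose proof (clamp_lip (thb - r4) (thb + r4) x y ltac:(lra)) as CL.
      set (cx := clamp (thb - r4) (thb + r4) x) in *.
      set (cy := clamp (thb - r4) (thb + r4) y) in *.
      assert (Hx : Rabs (cx - thb) < r) by (apply ab2; lra).
      assert (Hy : Rabs (cy - thb) < r) by (apply ab2; lra).
      assert (Rabs (h cx Z - h cy Z) <= 3 * c / 2 * Rabs (cx - cy)).
      { destruct (Rle_dec cx cy).
        - pose proof (Hinc Z cx cy HZ' Hx Hy r0).
          rewrite Rabs_minus_sym, (Rabs_minus_sym cx).
          rewrite (Rabs_pos_eq (cy - cx)) by lra. rewrite Rabs_pos_eq by lra. lra.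
        - pose proof (Hinc Z cy cx HZ' Hy Hx ltac:(lra)).
          rewrite (Rabs_pos_eq (cx - cy)) by lra. rewrite Rabs_pos_eq by lra. lra. }
      nra. }
    { lra. }
    { unfold hc. rewrite clamp_id by lra. lra. }
    { unfold hc. rewrite clamp_id by lra. lra. }
    unfold hc in Ez. rewrite clamp_id in Ez by lra.
    exists z. split; auto.
    assert (z <> thb - r4) by (intro; subst z; lra).
    assert (z <> thb + r4) by (intro; subst z; lra).
    apply ab2; lra. }
  set (Th := fun Z => epsilon (inhabits 0) (fun t => Rabs (t - thb) < r4 /\ h t Z = 0)).
  assert (Thspec : forall Z, Rabs Z < delta -> Rabs (Th Z - thb) < r4 /\ h (Th Z) Z = 0).
  { intros Z HZ. unfold Th. apply epsilon_spec. apply Thex; auto. }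
  assert (f1id : forall v t Z, v <> vl -> f1 psil psig vl t v Z = / (v - vl) * F v t Z).
  { intros v t Z Hv. unfold f1, F, F1. field. lra. }
  assert (f2id : forall v t Z, f2 psil psig vl t v Z = f1 psil psig vl t v Z + G v t Z).
  { intros v t Z. unfold f1, f2, G, Gf. ring. }
  exists delta, eps, (fun Z => w (Th Z) Z), Th.
  split; [lra|]. split; [lra|]. split.
  - intros Z HZ. destruct (Thspec Z HZ) as [HT HhT].
    assert (HTr : Rabs (Th Z - thb) < r) by lra.
    assert (HZd : Rabs Z < dZ) by lra.
    destruct (Wbox (Th Z) Z HTr HZd) as [B B'].
    destruct (Hbox (w (Th Z) Z) (Th Z) B' ltac:(lra)) as [X1 [X2 [X3 _]]].
    destruct (Wspec (Th Z) Z HTr HZd) as [_ HG].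
    assert (Hne : w (Th Z) Z <> vl) by lra.
    assert (E1 : f1 psil psig vl (Th Z) (w (Th Z) Z) Z = 0).
    { rewrite f1id by auto. unfold h in HhT. rewrite HhT. ring. }
    split; [apply Wclose; auto|].
    split; [lra|].
    split; [lra|]. split; [lra|]. split; [exact Hne|].
    split; [exact E1|].
    split; [rewrite f2id, E1, HG; ring|].
    intros v th Hv Hth Hav Hth0 Hvne Ev1 Ev2.
    rewrite f2id, Ev1 in Ev2. assert (HGv : G v th Z = 0) by lra.
    rewrite f1id in Ev1 by auto.
    assert (HFv : F v th Z = 0).
    { apply Rmult_integral in Ev1. destruct Ev1 as [E|E]; auto.
      exfalso. apply (Rinv_neq_0_compat (v - vl)); auto. lra. }
    assert (Hthr2 : Rabs (th - thb) < r) by lra.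
    assert (Hvw : v = w th Z).
    { apply (Wuniq th Z v Hthr2 HZd); auto. lra. }
    assert (Hh : h th Z = 0) by (unfold h; rewrite <- Hvw; exact HFv).
    assert (Hthe : th = Th Z).
    { destruct (Rtotal_order th (Th Z)) as [Hlt|[Heq|Hgt]]; auto.
      - pose proof (Hinc Z th (Th Z) HZd Hthr2 HTr ltac:(lra)). nra.
      - pose proof (Hinc Z (Th Z) th HZd HTr Hthr2 ltac:(lra)). nra. }
    split; [rewrite Hvw, Hthe; reflexivity|exact Hthe].
  - intros Za Zb Ha' Hb' Hab.
    destruct (Thspec Za Ha') as [HTa Hha]. destruct (Thspec Zb Hb') as [HTb Hhb].
    assert (HTar : Rabs (Th Za - thb) < r) by lra.
    assert (HTbr : Rabs (Th Zb - thb) < r) by lra.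
    assert (HZa : Rabs Za < dZ) by lra. assert (HZb : Rabs Zb < dZ) by lra.
    destruct (HZm (Th Za) Za Zb HTar HZa HZb) as [X _].
    destruct (Wbox (Th Za) Za HTar HZa) as [B _].
    assert (0 < (w (Th Za) Za - vl) ^ 2) by (apply pow_lt; unfold D0 in *; lra).
    assert (h (Th Za) Zb < 0) by nra.
    destruct (Rlt_le_dec (Th Za) (Th Zb)) as [Hlt|Hle]; auto.
    pose proof (Hinc Zb (Th Zb) (Th Za) HZb HTbr HTar Hle). nra.
Qed.
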